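(* Let $V$ be a vector space over $\Bbbk$ of dimension $m\geq 2$, and write $W=V^*\otimes V$. The following data are given in $\mathtt{Rep}\,\operatorname{GL}(V)$. - The inclusion $\iota:\operatorname{PS}^m(W)\to W^{\otimes m}$. - The map $\mathrm{ev}^{\otimes m}:W^{\otimes m}\to\mathds{1}$ defined by $\alpha_1\otimes v_1\otimes\cdots\otimes\alpha_m\otimes v_m\mapsto\prod_i\alpha_i(v_i)$. - The inclusion $\kappa:\operatorname{PE}^m(V^* )\otimes V^{\otimes m}\oplus (V^* )^{\otimes m}\otimes\operatorname{PE}^m(V)\to(V^* )^{\otimes m}\otimes V^{\otimes m}$. - The map $\pi:(V^* )^{\otimes m}\otimes V^{\otimes m}\to\mathds{1}$ defined as the projection onto $\bigwedge^mV^*\otimes\bigwedge^mV$ followed by the isomorphism $\alpha_1\wedge\cdots\wedge\alpha_m\otimes v_1\wedge\cdots\wedge v_m\mapsto\sum_{\sigma\in S_m}(-1)^{|\sigma|}\prod_i\alpha_i(v_{\sigma(i)})$. Then there exist morphisms of $\operatorname{GL}(V)$-modules $$\varphi:\operatorname{PE}^m(V^* )\otimes V^{\otimes m}\oplus (V^* )^{\otimes m}\otimes\operatorname{PE}^m(V)\to\operatorname{PS}^m(W),\qquad \psi:(V^* )^{\otimes m}\otimes V^{\otimes m}\to W^{\otimes m}$$ such that $\iota\circ\varphi=\psi\circ\kappa$ and $\mathrm{ev}^{\otimes m}\circ\psi=\pi$.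
   Context: $\Bbbk$ is an algebraically closed field of characteristic $p>2$. For an object $X$ of a symmetric monoidal $\Bbbk$-linear category, $\operatorname{S}^jX$ and $\bigwedge^jX$ denote the largest quotients of $X^{\otimes j}$ on which $S_j$ (acting via the braiding) acts trivially, respectively by the sign. Since $p\neq 2$, $X^{\otimes 2}=\operatorname{S}^2X\oplus\bigwedge^2X$. The parity of a permutation $\sigma$ is written $|\sigma|$. Define $$\operatorname{PS}^j(X)=\bigoplus_{i=0}^{j-2}X^{\otimes i}\otimes\textstyle\bigwedge^2X\otimes X^{\otimes(j-i-2)},\qquad \operatorname{PE}^j(X)=\bigoplus_{i=0}^{j-2}X^{\otimes i}\otimes\operatorname{S}^2X\otimes X^{\otimes(j-i-2)}.$$ Each comes with a map to $X^{\otimes j}$ given by the inclusions of direct summands of $X^{\otimes j}$. This gives exact sequences $\operatorname{PS}^j(X)\to X^{\otimes j}\to\operatorname{S}^jX\to 0$ and $\operatorname{PE}^j(X)\to X^{\otimes j}\to\bigwedge^jX\to0$. *)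

(* Defs.v *)
From HB Require Import structures.
From mathcomp Require Import all_boot all_order all_algebra.
From mathcomp Require Import perm.
Set Implicit Arguments. Unset Strict Implicit. Unset Printing Implicit Defensive.
Import GRing.Theory.
Local Open Scope ring_scope.

(* V = K^m with standard basis e_0..e_{m-1}; V^dual with dual basis.
   A tensor in X_1 ⊗ ... ⊗ X_n (each X_l ∈ {V, V^dual}) is its coordinate
   function on index tuples (n.-tuple 'I_m). *)
Notation tens K m n := {ffun n.-tuple 'I_m -> (GRing.Field.sort K)^o}.

(* signature: tnth s l = true iff factor l is V, false iff it is V^dual *)
(* GL(V)-action: V-factor by g, V^dual-factor by the contragredient (g^-1)^T *)
Definition tact (K : fieldType) (m n : nat) (s : n.-tuple bool)
  (g : 'M[K]_m) (t : tens K m n) : tens K m n :=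
  [ffun j : n.-tuple 'I_m => \sum_(k : n.-tuple 'I_m)
     (\prod_(l < n) (if tnth s l then g (tnth j l) (tnth k l)
                      else invmx g (tnth k l) (tnth j l))) * t k].

(* index read as nat (0 out of range) *)
Definition idx (m n : nat) (j : n.-tuple 'I_m) (k : nat) : nat :=
  nth 0%N (map val j) k.

Definition swapn (a b k : nat) : nat :=
  if k == a then b else if k == b then a else k.

Definition symf (K : fieldType) (m n : nat) (f : nat -> nat) (t : tens K m n) :=
  forall j j' : n.-tuple 'I_m, (forall k, idx j' k = idx j (f k)) -> t j' = t j.
Definition altf (K : fieldType) (m n : nat) (f : nat -> nat) (t : tens K m n) :=
  forall j j' : n.-tuple 'I_m, (forall k, idx j' k = idx j (f k)) -> t j' = - t j.

(* W^{⊗m} = (V^dual⊗V)^{⊗m}: positions 2i (V^dual) and 2i+1 (V) form the i-th W *)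
Definition sgnW (m : nat) : (m + m).-tuple bool := [tuple odd i | i < m + m].
(* (V^dual)^{⊗m} ⊗ V^{⊗m}: positions < m are V^dual, positions >= m are V *)
Definition sgnC (m : nat) : (m + m).-tuple bool := [tuple (m <= i)%N | i < m + m].

Arguments sgnW : clear implicits.
Arguments sgnC : clear implicits.

Notation TW K m := (tens K m (m + m)).
Notation TC K m := (tens K m (m + m)).

(* swap of the W-factors i and i+1 in W^{⊗m} *)
Definition Wswap (i : nat) : nat -> nat :=
  fun k => swapn i.*2 i.*2.+2 (swapn i.*2.+1 i.*2.+3 k).

(* PS^m(W) = ⊕_{i<m-1} W^{⊗i} ⊗ Λ²W ⊗ W^{⊗(m-i-2)}, Λ²W ⊂ W⊗W the
   antisymmetric tensors (sign component, p ≠ 2). Elements: families. *)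
Notation PScod K m := {ffun 'I_m.-1 -> TW K m}.
Definition inPS (K : fieldType) (m : nat) (y : PScod K m) :=
  forall i : 'I_m.-1, altf (Wswap i) (y i).
Definition iota_PS (K : fieldType) (m : nat) (y : PScod K m) : TW K m :=
  \sum_(i < m.-1) y i.
Definition actPS (K : fieldType) (m : nat) (g : 'M[K]_m) (y : PScod K m)
  : PScod K m := [ffun i => tact (sgnW m) g (y i)].

(* PE^m(V^dual)⊗V^{⊗m} ⊕ (V^dual)^{⊗m}⊗PE^m(V): first component, summand i =
   tensors symmetric in V^dual-positions i,i+1; second component, summand i =
   tensors symmetric in V-positions m+i, m+i+1. *)
Notation PEdom K m :=
  ({ffun 'I_m.-1 -> TC K m} * {ffun 'I_m.-1 -> TC K m})%type.
Definition inPE (K : fieldType) (m : nat) (x : PEdom K m) :=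
  (forall i : 'I_m.-1, symf (swapn i i.+1) (x.1 i)) /\
  (forall i : 'I_m.-1, symf (swapn (m + i) (m + i).+1) (x.2 i)).
Definition kappa (K : fieldType) (m : nat) (x : PEdom K m) : TC K m :=
  \sum_(i < m.-1) x.1 i + \sum_(i < m.-1) x.2 i.
Definition actPE (K : fieldType) (m : nat) (g : 'M[K]_m) (x : PEdom K m)
  : PEdom K m :=
  ([ffun i => tact (sgnC m) g (x.1 i)], [ffun i => tact (sgnC m) g (x.2 i)]).

(* ev^{⊗m}: e^dual_{a_1}⊗e_{b_1}⊗...⊗e^dual_{a_m}⊗e_{b_m} ↦ ∏ δ(a_i,b_i) *)
Definition evm (K : fieldType) (m : nat) (t : TW K m) : K :=
  \sum_(j : (m + m).-tuple 'I_m | [forall i : 'I_m, idx j i.*2 == idx j i.*2.+1])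
    t j.

(* π: α_1⊗..⊗α_m⊗v_1⊗..⊗v_m ↦ α_1∧..∧α_m ⊗ v_1∧..∧v_m ↦
   Σ_σ (-1)^σ ∏_i α_i(v_{σ(i)}), extended linearly (basis tensors) *)
Definition piC (K : fieldType) (m : nat) (t : TC K m) : K :=
  \sum_(a : m.-tuple 'I_m) \sum_(b : m.-tuple 'I_m)
    t (cat_tuple a b) *
    \sum_(s : 'S_m) (-1) ^+ s * \prod_(i < m) ((tnth a i == tnth b (s i))%:R).

(* Main.v *)
Require Import Defs.
From HB Require Import structures.
From mathcomp Require Import all_boot all_order all_algebra.
From mathcomp Require Import perm zify.
Set Implicit Arguments. Unset Strict Implicit. Unset Printing Implicit Defensive.
Import GRing.Theory.
Local Open Scope ring_scope.

Lemma idx_ord M n (j : n.-tuple 'I_M) (l : 'I_n) : idx j l = val (tnth j l).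
Proof. by rewrite /idx (nth_map (tnth j l)) ?size_tuple // -tnth_nth. Qed.

Lemma idx_out M n (j : n.-tuple 'I_M) k : (n <= k)%N -> idx j k = 0%N.
Proof. by move=> h; rewrite /idx nth_default // size_map size_tuple. Qed.

Lemma tup_eq M n (j j' : n.-tuple 'I_M) :
  (forall l : 'I_n, idx j l = idx j' l) -> j = j'.
Proof. by move=> h; apply: eq_from_tnth => l; apply: val_inj; rewrite /= -!idx_ord. Qed.

Lemma idx_cat M a b (x : a.-tuple 'I_M) (y : b.-tuple 'I_M) k :
  idx (cat_tuple x y) k = if (k < a)%N then idx x k else idx y (k - a).
Proof. by rewrite /idx /= map_cat nth_cat size_map size_tuple. Qed.

Definition pt n M (f : 'S_n) (j : n.-tuple 'I_M) : n.-tuple 'I_M :=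
  [tuple tnth j (f l) | l < n].

Lemma tnth_pt n M (f : 'S_n) (j : n.-tuple 'I_M) l : tnth (pt f j) l = tnth j (f l).
Proof. by rewrite tnth_mktuple. Qed.

Lemma idx_pt n M (f : 'S_n) (j : n.-tuple 'I_M) (l : 'I_n) : idx (pt f j) l = idx j (f l).
Proof. by rewrite !idx_ord tnth_pt. Qed.

Lemma pt_mul n M (f g : 'S_n) (j : n.-tuple 'I_M) : pt (f * g) j = pt f (pt g j).
Proof. by apply: eq_from_tnth => l; rewrite !tnth_pt permM. Qed.

Lemma pt_inj n M (f : 'S_n) : injective (@pt n M f).
Proof.
move=> x y h; have := congr1 (pt f^-1) h.
by rewrite -!pt_mul mulVg; move=> e; apply: eq_from_tnth => l;
  move/(congr1 (fun z => tnth z l)): e; rewrite !tnth_pt perm1.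
Qed.

Lemma tsum_pt (K : fieldType) n M (f : 'S_n) (s s' : n.-tuple bool) (g h : 'M[K]_M)
  (hs : forall l, tnth s' (f l) = tnth s l) (t : n.-tuple 'I_M -> K) (j : n.-tuple 'I_M) :
  \sum_k (\prod_l (if tnth s' l then g (tnth j l) (tnth k l) else h (tnth k l) (tnth j l))) * t (pt f k)
  = \sum_k (\prod_l (if tnth s l then g (tnth (pt f j) l) (tnth k l) else h (tnth k l) (tnth (pt f j) l))) * t k.
Proof.
rewrite [RHS](reindex_inj (@pt_inj n M f)) /=; apply: eq_bigr => k _; congr (_ * _).
rewrite (reindex_inj (@perm_inj _ f)) /=; apply: eq_bigr => l _.
by rewrite !tnth_pt hs.
Qed.

Lemma ffunDZ (K : fieldType) (T : finType) (a : K) (t u : {ffun T -> K^o}) x :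
  (a *: t + u) x = a * t x + u x.
Proof. by rewrite !ffunE. Qed.
Lemma ffun0' (K : fieldType) (T : finType) x : (0 : {ffun T -> K^o}) x = 0.
Proof. by rewrite !ffunE. Qed.

Lemma swapn_id a b k : a <> k -> b <> k -> swapn a b k = k.
Proof. rewrite /swapn; repeat case: eqP => /= ?; lia. Qed.
Lemma swapnE a b k : (k = a /\ swapn a b k = b) \/ (k = b /\ k <> a /\ swapn a b k = a)
  \/ (k <> a /\ k <> b /\ swapn a b k = k).
Proof. rewrite /swapn; case: (k =P a) => ?; [left|right]; case: (k =P b) => ?; lia. Qed.
Lemma sw_even i k : Wswap i k.*2 = (swapn i i.+1 k).*2.
Proof.
rewrite /Wswap -!muln2.
have H1 := swapnE (i * 2).+1 (i * 2).+3 (k * 2).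
have H2 := swapnE (i * 2) (i * 2).+2 (swapn (i * 2).+1 (i * 2).+3 (k * 2)).
have H3 := swapnE i i.+1 k.
move: H1 H2 H3; generalize (swapn (i * 2).+1 (i * 2).+3 (k * 2)) => x.
generalize (swapn (i * 2) (i * 2).+2 x) (swapn i i.+1 k); lia.
Qed.
Lemma sw_odd i k : Wswap i k.*2.+1 = (swapn i i.+1 k).*2.+1.
Proof.
rewrite /Wswap -!muln2.
have H1 := swapnE (i * 2).+1 (i * 2).+3 (k * 2).+1.
have H2 := swapnE (i * 2) (i * 2).+2 (swapn (i * 2).+1 (i * 2).+3 (k * 2).+1).
have H3 := swapnE i i.+1 k.
move: H1 H2 H3; generalize (swapn (i * 2).+1 (i * 2).+3 (k * 2).+1) => x.
generalize (swapn (i * 2) (i * 2).+2 x) (swapn i i.+1 k); lia.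
Qed.
Lemma swapn_shift m i l : (m <= l)%N ->
  swapn (m + i) (m + i).+1 l = (m + swapn i i.+1 (l - m))%N.
Proof. rewrite /swapn; repeat case: eqP => /= ?; lia. Qed.
Lemma swapn_lt m i l : (l < m)%N -> (i.+1 < m)%N -> (swapn i i.+1 l < m)%N.
Proof. rewrite /swapn; repeat case: eqP => /= ?; lia. Qed.

Lemma halfS2 n : (n.*2.+1)./2 = n.
Proof. exact: (half_bit_double n true). Qed.

Lemma pt1 n M (d : n.-tuple 'I_M) : pt 1 d = d.
Proof. by apply: eq_from_tnth => l; rewrite tnth_pt perm1. Qed.

Lemma prod_eq (K : fieldType) n M (s : 'S_n) (a b : n.-tuple 'I_M) :
  \prod_(i < n) ((tnth a i == tnth b (s i))%:R : K) = (a == pt s b)%:R.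
Proof.
case: eqP => [->|ne].
  by apply: big1 => i _; rewrite tnth_pt eqxx.
case: (pickP (fun i => tnth a i != tnth b (s i))) => [i hi|hn].
  by rewrite (bigD1 i) //= (negbTE hi) mul0r.
exfalso; apply: ne; apply: eq_from_tnth => i; rewrite tnth_pt.
by have := hn i => /negbFE/eqP.
Qed.

Section Main.
Variable m' : nat.
Local Notation m := m'.+1.

Definition fn (s : 'S_m) (l : nat) : nat :=
  if (l < m)%N then l.*2 else (nat_of_ord (s (inord (l - m)))).*2.+1.

Lemma fn_lt s (l : 'I_(m + m)) : (fn s l < m + m)%N.
Proof.
rewrite /fn -!muln2; case: ifP => h; first lia.
have := ltn_ord (s (inord (l - m))); lia.
Qed.

Lemma fn_inj s : injective (fun l : 'I_(m + m) => Ordinal (fn_lt s l)).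
Proof.
move=> x y [] ; rewrite /fn -!muln2.
have hx := ltn_ord x; have hy := ltn_ord y.
case: ifP => h1; case: ifP => h2 => e; apply: val_inj => /=.
all: try lia.
move: e => /eqP; rewrite eqSS eqn_pmul2r // => /eqP/val_inj/perm_inj/(congr1 val).
rewrite /= !inordK; lia.
Qed.

Definition F s : 'S_(m + m) := perm (@fn_inj s).

Lemma FE s l : val (F s l) = fn s l.
Proof. by rewrite permE. Qed.

Lemma FW s l : tnth (sgnW m) (F s l) = tnth (sgnC m) l.
Proof. rewrite !tnth_mktuple FE /fn; case: ifP => h; rewrite ?odd_double /=; lia. Qed.

Variable K : fieldType.

Definition psi (t : TC K m) : TW K m :=
  [ffun J => \sum_(s : 'S_m) (-1) ^+ s * (t (pt (F s) J) : K)].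

Lemma psi_lin (a : K) t u : psi (a *: t + u) = a *: psi t + psi u.
Proof.
apply/ffunP => J; rewrite !ffunDZ !ffunE mulr_sumr -big_split /=; apply: eq_bigr => s _.
by rewrite ffunDZ mulrDr mulrCA.
Qed.

Lemma psi_equiv g t : psi (tact (sgnC m) g t) = tact (sgnW m) g (psi t).
Proof.
apply/ffunP => J; rewrite /tact !ffunE.
under eq_bigr do rewrite ffunE.
under [RHS]eq_bigr do rewrite ffunE mulr_sumr.
rewrite [RHS]exchange_big /=; apply: eq_bigr => s _.
under [RHS]eq_bigr do rewrite mulrCA.
rewrite -mulr_sumr; congr (_ * _).
rewrite (@tsum_pt _ _ _ _ _ _ _ _ (FW s)).
by [].
Qed.

Definition tau (i : nat) : 'S_m := tperm (inord i) (inord i.+1).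

Lemma tauE i (hi : (i < m')%N) (z : 'I_m) : val (tau i z) = swapn i i.+1 z.
Proof.
rewrite /tau; case: tpermP => [->|->|h1 h2].
- by rewrite /= !inordK /swapn ?eqxx //; lia.
- by rewrite /= !inordK /swapn ?(gtn_eqF (ltnSn i)) ?eqxx //; lia.
have n1 : (nat_of_ord z) <> i by move=> e; apply: h1; apply: val_inj; rewrite /= inordK //; lia.
have n2 : (nat_of_ord z) <> i.+1 by move=> e; apply: h2; apply: val_inj; rewrite /= inordK //; lia.
change (nat_of_ord z = swapn i i.+1 z); rewrite swapn_id //; lia.
Qed.

Lemma fnA i (hi : (i < m')%N) s (l : 'I_(m + m)) :
  Wswap i (fn s l) = fn (s * tau i) (swapn i i.+1 l).
Proof.
rewrite /fn; case: (ltnP l m) => hl.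
  by rewrite (swapn_lt hl) ?sw_even //; lia.
rewrite swapn_id; try lia.
rewrite ltnNge hl /= sw_odd permM tauE //.
Qed.

Lemma fnB i (hi : (i < m')%N) s (l : 'I_(m + m)) :
  fn (tau i * s) l = fn s (swapn (m + i) (m + i).+1 l).
Proof.
rewrite /fn; case: (ltnP l m) => hl.
  by rewrite swapn_id ?hl //; lia.
rewrite swapn_shift // ifF; last lia.
rewrite permM; congr ((nat_of_ord (s _)).*2.+1).
have hl' : (l - m < m)%N by have := ltn_ord l; lia.
apply: val_inj; rewrite /= tauE // !inordK // addKn //.
by apply: swapn_lt; lia.
Qed.

Lemma sgn_tau i (hi : (i < m')%N) : odd_perm (tau i) = true.
Proof.
rewrite odd_tperm; apply/eqP => /(congr1 val); rewrite /= !inordK; lia.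
Qed.

Lemma psi_alt i (hi : (i < m')%N) t :
  symf (swapn i i.+1) t -> altf (Wswap i) (psi t).
Proof.
move=> hs J J' hJ; rewrite !ffunE.
rewrite [in RHS](reindex_inj (mulIg (tau i))) /= -sumrN; apply: eq_bigr => s _.
rewrite odd_permM sgn_tau // signr_addb /= mulrN1 mulNr opprK; congr (_ * _).
apply: hs => k.
case: (ltnP k (m + m)) => hk; last first.
  by rewrite swapn_id ?idx_out //; lia.
have hk' : (swapn i i.+1 k < m + m)%N.
  by have := swapnE i i.+1 k; generalize (swapn i i.+1 k); lia.
pose l := Ordinal hk; pose l' := Ordinal hk'.
change k with (nat_of_ord l).
rewrite idx_pt FE hJ fnA //.
change (swapn i i.+1 l) with (nat_of_ord l').
by rewrite idx_pt FE.
Qed.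

Lemma psi_zero (h2 : (2%:R : K) != 0) i (hi : (i < m')%N) t :
  symf (swapn (m + i) (m + i).+1) t -> psi t = 0.
Proof.
move=> hs; apply/ffunP => J; rewrite ffunE ffun0'.
set S := \sum_s _.
have eS : S = - S.
  rewrite {1}/S (reindex_inj (mulgI (tau i))) /= -sumrN; apply: eq_bigr => s _.
  rewrite odd_permM sgn_tau // addTb signrN mulNr; congr (- (_ * _)).
  apply: hs => k.
  case: (ltnP k (m + m)) => hk; last first.
    by rewrite swapn_id ?idx_out //; lia.
  have hk' : (swapn (m + i) (m + i).+1 k < m + m)%N.
    by have := swapnE (m + i) (m + i).+1 k; generalize (swapn (m + i) (m + i).+1 k); lia.
  pose l := Ordinal hk; pose l' := Ordinal hk'.
  change k with (nat_of_ord l).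
  rewrite idx_pt FE fnB //.
  change (swapn (m + i) (m + i).+1 l) with (nat_of_ord l').
  by rewrite idx_pt FE.
have : S * 2%:R = 0 by rewrite mulr_natr mulr2n {1}eS addNr.
by move/eqP; rewrite mulf_eq0 (negbTE h2) orbF => /eqP.
Qed.

Lemma dbl_lt (i : 'I_m) : (i.*2 < m + m)%N.
Proof. have := ltn_ord i; rewrite -muln2; lia. Qed.

Definition dup (d : m.-tuple 'I_m) : (m + m).-tuple 'I_m :=
  [tuple tnth d (inord (l./2)) | l < m + m].
Definition evn (J : (m + m).-tuple 'I_m) : m.-tuple 'I_m :=
  [tuple tnth J (Ordinal (dbl_lt i)) | i < m].

Lemma idx_inord (d : m.-tuple 'I_m) x : (x < m)%N -> idx d x = val (tnth d (inord x)).
Proof. by move=> hx; rewrite -idx_ord /= inordK. Qed.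

Lemma idx_dup d (l : 'I_(m + m)) : idx (dup d) l = idx d (l./2).
Proof.
rewrite idx_ord tnth_mktuple idx_inord //; have := ltn_ord l.
by rewrite -(odd_double_half l); case: (odd l) => /=; rewrite -muln2; lia.
Qed.

Lemma idx_evn J (i : 'I_m) : idx (evn J) i = idx J i.*2.
Proof. by rewrite idx_ord tnth_mktuple -idx_ord. Qed.

Definition diagP (J : (m + m).-tuple 'I_m) :=
  [forall i : 'I_m, idx J i.*2 == idx J i.*2.+1].

Lemma sum_diag (h : (m + m).-tuple 'I_m -> K) :
  \sum_(J | diagP J) h J = \sum_d h (dup d).
Proof.
rewrite (reindex_onto dup evn) /=; last first.
  move=> J /forallP hJ; apply: tup_eq => l; rewrite idx_dup.
  have hl := ltn_ord l.
  have hh : (l./2 < m)%N by rewrite -(odd_double_half l) in hl; move: hl;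
    case: (odd l) => /=; rewrite -muln2; lia.
  rewrite (idx_inord _ hh) -idx_ord /= idx_evn inordK //.
  rewrite -{2}(odd_double_half l); case: (odd l) => /=; rewrite ?add0n ?add1n //.
  by have /eqP := hJ (inord l./2); rewrite inordK.
apply: eq_bigl => d; apply/andP; split.
  apply/forallP => i.
  have hi2 : (i.*2.+1 < m + m)%N by have := ltn_ord i; rewrite -muln2; lia.
  have e1 := idx_dup d (Ordinal (dbl_lt i)); have e2 := idx_dup d (Ordinal hi2).
  by simpl in e1, e2; rewrite e1 e2 doubleK uphalf_double.
apply/eqP; apply: tup_eq => i; rewrite idx_evn.
have e1 := idx_dup d (Ordinal (dbl_lt i)).
by simpl in e1; rewrite e1 doubleK.
Qed.

Lemma pt_dup s d : pt (F s) (dup d) = cat_tuple d (pt s d).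
Proof.
apply: tup_eq => l; rewrite idx_pt idx_dup FE idx_cat /fn.
case: ifP => hl; first by rewrite doubleK.
rewrite halfS2.
have hl' : (l - m < m)%N by have := ltn_ord l; lia.
by rewrite -[X in idx (pt _ _) X](@inordK m' (l - m)) // idx_pt.
Qed.

Lemma evm_psi t : evm (psi t) = piC t.
Proof.
have eR : piC t = \sum_(s : 'S_m) (-1) ^+ s *
    \sum_(b : m.-tuple 'I_m) (t (cat_tuple (pt s b) b) : K).
  rewrite /piC.
  under eq_bigr => a _ do under eq_bigr => b _ do rewrite mulr_sumr.
  under eq_bigr => a _ do rewrite exchange_big /=.
  rewrite exchange_big /=; apply: eq_bigr => s _.
  rewrite mulr_sumr exchange_big /=; apply: eq_bigr => b _.
  under eq_bigr do rewrite prod_eq.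
  rewrite (bigD1 (pt s b)) //= big1 ?addr0 ?eqxx ?mulr1 1?mulrC //.
  by move=> a ha; rewrite (negbTE ha) /= mulr0 mulr0.
rewrite eR /evm.
under eq_bigr do rewrite ffunE.
have hinj : injective (fun s : 'S_m => (s^-1)%g) by exact: invg_inj.
rewrite exchange_big /= [RHS](reindex_inj hinj) /=; apply: eq_bigr => s _.
rewrite odd_permV -mulr_sumr (sum_diag (fun J => (t (pt (F s) J) : K))); congr (_ * _).
rewrite [RHS](reindex_inj (@pt_inj _ _ s)) /=; apply: eq_bigr => d _.
by rewrite pt_dup -pt_mul mulVg pt1.
Qed.

End Main.

Lemma psiD m' (K : fieldType) (t u : TC K m'.+1) : psi (t + u) = psi t + psi u.
Proof. by have := @psi_lin m' K 1 t u; rewrite !scale1r. Qed.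
Lemma psi0 m' (K : fieldType) : @psi m' K 0 = 0.
Proof. by have /eqP := psiD (0 : TC K m'.+1) 0; rewrite addr0 -subr_eq subrr eq_sym => /eqP. Qed.

Unset Implicit Arguments.
Set Strict Implicit.

Theorem lemma2p2 (K : closedFieldType) (p : nat) (hp : p \in [pchar K])
  (hp2 : (2 < p)%N) (m : nat) (hm : (2 <= m)%N) :
  exists (phi : PEdom K m -> PScod K m) (psi : TC K m -> TW K m),
    (forall (a : K) (x y : PEdom K m), inPE x -> inPE y ->
        phi (a *: x + y) = a *: phi x + phi y) /\
    (forall x : PEdom K m, inPE x -> inPS (phi x)) /\
    (forall (g : 'M[K]_m) (x : PEdom K m), g \in unitmx -> inPE x ->
        phi (actPE g x) = actPS g (phi x)) /\
    (forall (a : K) (t u : TC K m), psi (a *: t + u) = a *: psi t + psi u) /\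
    (forall (g : 'M[K]_m) (t : TC K m), g \in unitmx ->
        psi (tact (sgnC m) g t) = tact (sgnW m) g (psi t)) /\
    (forall x : PEdom K m, inPE x -> iota_PS (phi x) = psi (kappa x)) /\
    (forall t : TC K m, evm (psi t) = piC t).
Proof.
case: m hm => [|m'] // hm.
have h2 : (2%:R : K) != 0.
  by rewrite -(dvdn_pcharf hp); apply/negP => /dvdn_leq; lia.
exists (fun x : PEdom K m'.+1 => [ffun i => @psi m' K (x.1 i)] : PScod K m'.+1), (@psi m' K).
split.
  move=> a x y _ _; apply/ffunP => i; rewrite !ffunE /=.
  exact: psi_lin.
split.
  by move=> x [hx1 _] i; rewrite ffunE; apply: psi_alt; [exact: ltn_ord | exact: hx1].
split.
  by move=> g x _ _; apply/ffunP => i; rewrite !ffunE psi_equiv.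
split; first exact: psi_lin.
split; first by move=> g t _; exact: psi_equiv.
split; last exact: evm_psi.
move=> x [_ hx2]; rewrite /iota_PS /kappa.
rewrite psiD !(big_morph _ (@psiD m' K) (@psi0 m' K)).
rewrite [X in _ = _ + X]big1 ?addr0; last first.
  by move=> i _; apply: (psi_zero h2 (ltn_ord i)); exact: hx2.
by apply: eq_bigr => i _; rewrite ffunE.
Qed.
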